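(* Let $\Omega\subset\mathbb{R}^N$ be a bounded domain with Lipschitz boundary, $s\in(0,1)$, $p\in(1,+\infty)$. For $\delta>0$ define $\mathcal{J}_{\delta,s,p}:L^p(\Omega)\to[0,+\infty]$ by $\mathcal{J}_{\delta,s,p}(u)=[u]_{W^{\delta,s,p}(\Omega_{\delta})}^p$ (with $u$ extended by zero outside $\Omega$). Then, with respect to the strong topology of $L^p(\Omega)$, $\mathcal{J}_{\delta,s,p}$ $\Gamma$-converges as $\delta\to+\infty$ to $\mathcal{J}_{\infty,s,p}(u)=[u]_{W^{s,p}(\mathbb{R}^N)}^p$ (with $u$ extended by zero outside $\Omega$), for all $u\in L^p(\Omega)$.
   Context: Here $\partial_\delta\Omega=\{y\in\mathbb{R}^N\setminus\Omega: |x-y|<\delta \text{ for some } x\in\Omega\}$, $\Omega_\delta=\Omega\cup\partial_\delta\Omega$, $[u]_{W^{\delta,s,p}(\Omega_{\delta})}^p=\int_{\Omega_{\delta}}\int_{\Omega_{\delta}\cap B(x,\delta)}\frac{|u(x)-u(y)|^p}{|x-y|^{N+sp}}dydx$ and $[u]_{W^{s,p}(\mathbb{R}^N)}^p=\int_{\mathbb{R}^N}\int_{\mathbb{R}^N}\frac{|u(x)-u(y)|^p}{|x-y|^{N+sp}}dydx$, both possibly $+\infty$. *)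

(* Defs.v *)
From HB Require Import structures.
From mathcomp Require Import all_boot all_order all_algebra.
From mathcomp Require Import all_classical all_reals all_analysis.
Set Implicit Arguments. Unset Strict Implicit. Unset Printing Implicit Defensive.
Import Order.TTheory GRing.Theory Num.Theory.
Local Open Scope classical_set_scope.
Local Open Scope ring_scope.

Section Defs.
Variable R : realType.

(* Points of R^N are N-tuples of reals (carrying the product = Borel
   sigma-algebra of the library). *)
Definition vsub N (x y : N.-tuple R) : N.-tuple R :=
  [tuple tnth x i - tnth y i | i < N].
Definition vscale N (a : R) (x : N.-tuple R) : N.-tuple R :=
  [tuple a * tnth x i | i < N].
Definition dot N (x y : N.-tuple R) : R := \sum_(i < N) tnth x i * tnth y i.
Definition enorm N (x : N.-tuple R) : R := Num.sqrt (dot x x).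
Definition edist N (x y : N.-tuple R) : R := enorm (vsub x y).
Definition eball N (x : N.-tuple R) (r : R) : set (N.-tuple R) :=
  [set y | edist x y < r].

Definition eopen N (A : set (N.-tuple R)) : Prop :=
  forall x, A x -> exists2 r : R, 0 < r & eball x r `<=` A.
Definition econnected N (A : set (N.-tuple R)) : Prop :=
  ~ (exists U V : set (N.-tuple R), [/\ eopen U, eopen V, A `<=` U `|` V,
        A `&` U !=set0 /\ A `&` V !=set0 & A `&` U `&` V = set0]).
Definition ebounded N (A : set (N.-tuple R)) : Prop :=
  exists M : R, forall x, A x -> enorm x <= M.
Definition domain N (A : set (N.-tuple R)) : Prop :=
  [/\ A !=set0, eopen A & econnected A].
Definition eboundary N (A : set (N.-tuple R)) : set (N.-tuple R) :=
  [set x | forall r : R, 0 < r ->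
     eball x r `&` A !=set0 /\ eball x r `&` ~` A !=set0].

(* Lipschitz boundary: near every boundary point x0, in some orthonormal
   coordinate system (z, t) with z in the hyperplane e^perp and t the
   coordinate along the unit vector e, A is the subgraph {t < g z} of a
   Lipschitz function g defined on e^perp. *)
Definition lipschitz_boundary N (A : set (N.-tuple R)) : Prop :=
  forall x0, eboundary A x0 ->
  exists r : R, exists e : N.-tuple R, exists L : R,
  exists g : N.-tuple R -> R,
  [/\ 0 < r, enorm e = 1, 0 <= L,
      (forall z1 z2, dot z1 e = 0 -> dot z2 e = 0 ->
         `|g z1 - g z2| <= L * edist z1 z2) &
      (forall x, eball x0 r x ->
         (A x <-> dot (vsub x x0) e <
                   g (vsub (vsub x x0) (vscale (dot (vsub x x0) e) e))))].

(* Lebesgue integral on R^N of a nonnegative function, as the iterated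
   integral w.r.t. the one-dimensional Lebesgue measure (Tonelli). *)
Fixpoint iint (N : nat) : (N.-tuple R -> \bar R) -> \bar R :=
  match N with
  | 0 => fun f => f [tuple]
  | n.+1 => fun f =>
      (\int[@lebesgue_measure R]_(x in [set: R])
          iint (fun t : n.-tuple R => f [tuple of x :: t]))%E
  end.

Definition iint_on N (A : set (N.-tuple R)) (f : N.-tuple R -> \bar R) :=
  iint (fun x => if `[< A x >] then f x else 0%E).

Definition zext N (Om : set (N.-tuple R)) (u : N.-tuple R -> R) :=
  fun x => if `[< Om x >] then u x else 0.

Definition inLp N (Om : set (N.-tuple R)) (p : R) (u : N.-tuple R -> R) :=
  measurable_fun [set: N.-tuple R] (zext Om u) /\
  (iint_on Om (fun x => (`|u x| `^ p)%:E) < +oo)%E.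

Definition Lp_cvg N (Om : set (N.-tuple R)) (p : R)
    (un : nat -> N.-tuple R -> R) (u : N.-tuple R -> R) :=
  (fun n => iint_on Om (fun x => (`|un n x - u x| `^ p)%:E)) @ \oo --> 0%E.

Definition Om_delta N (Om : set (N.-tuple R)) (d : R) : set (N.-tuple R) :=
  Om `|` [set y | ~ Om y /\ exists2 x, Om x & edist x y < d].

Definition gkernel N (s p : R) (v : N.-tuple R -> R) (x y : N.-tuple R) :=
  (`|v x - v y| `^ p / edist x y `^ (N%:R + s * p))%:E.

Definition J_delta N (Om : set (N.-tuple R)) (s p d : R) (u : N.-tuple R -> R)
  : \bar R :=
  iint_on (Om_delta Om d) (fun x =>
    iint_on (Om_delta Om d `&` eball x d) (fun y =>
      gkernel s p (zext Om u) x y)).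

Definition J_infty N (Om : set (N.-tuple R)) (s p : R) (u : N.-tuple R -> R)
  : \bar R :=
  iint (fun x => iint (fun y => gkernel s p (zext Om u) x y)).

Definition Gamma_cvg_pinfty N (Om : set (N.-tuple R)) (p : R)
    (F : R -> (N.-tuple R -> R) -> \bar R) (G : (N.-tuple R -> R) -> \bar R) :=
  forall dn : nat -> R, dn @ \oo --> +oo ->
  forall u, inLp Om p u ->
  (forall un : nat -> N.-tuple R -> R, (forall n, inLp Om p (un n)) ->
     Lp_cvg Om p un u -> (G u <= limn_einf (fun n => F (dn n) (un n)))%E) /\
  (exists2 un : nat -> N.-tuple R -> R, (forall n, inLp Om p (un n)) &
     Lp_cvg Om p un u /\ (limn_esup (fun n => F (dn n) (un n)) <= G u)%E).

End Defs.

(* Main.v *)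
Require Import Defs.
From HB Require Import structures.
From mathcomp Require Import all_boot all_order all_algebra.
From mathcomp Require Import all_classical all_reals all_analysis.
Import Order.TTheory GRing.Theory Num.Theory.
Local Open Scope classical_set_scope.
Local Open Scope ring_scope.
From mathcomp Require Import measurable_realfun lebesgue_integral_fubini.
From mathcomp Require Import ring lra.
Import numFieldTopology.Exports numFieldNormedType.Exports.
Set Implicit Arguments. Unset Strict Implicit.
Section S.
Variable R : realType.
Local Notation leb := (@lebesgue_measure R).
Local Open Scope ereal_scope.

Lemma int_le (f g : R -> \bar R) : (forall x, 0 <= f x) -> (forall x, f x <= g x) ->
  \int[leb]_(x in [set: R]) f x <= \int[leb]_(x in [set: R]) g x.
Proof.
move=> f0 fg; have g0 : forall x, 0 <= g x by move=> x; exact: le_trans (f0 x) (fg x).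
rewrite !ge0_integralTE //; apply: ereal_sup_le => _ [h /= hf <-]; exists h => //= x.
exact: le_trans (hf x) (fg x).
Qed.

Lemma iint_ge0 N (f : N.-tuple R -> \bar R) : (forall x, 0 <= f x) -> 0 <= iint f.
Proof.
elim: N f => [|n IH] f f0 /=; first exact: f0.
by apply: integral_ge0 => x _; apply: IH => t; exact: f0.
Qed.

Lemma iint_le N (f g : N.-tuple R -> \bar R) : (forall x, 0 <= f x) ->
  (forall x, f x <= g x) -> iint f <= iint g.
Proof.
elim: N f g => [|n IH] f g f0 fg /=; first exact: fg.
apply: int_le => x; first by apply: iint_ge0 => t; exact: f0.
by apply: IH => t; [exact: f0|exact: fg].
Qed.

Lemma iint0 N : iint (fun _ : N.-tuple R => 0) = 0.
Proof.
elim: N => [|n IH] //=.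
under eq_integral => x _ do rewrite IH.
exact: integral0.
Qed.

Lemma mcons N (f : N.+1.-tuple R -> \bar R) : measurable_fun setT f ->
  measurable_fun setT (fun z : R * N.-tuple R => f [tuple of z.1 :: z.2]).
Proof.
move=> mf; apply: (measurableT_comp mf).
exact: (measurable_cons measurable_fst measurable_snd).
Qed.

Lemma mcons_sec N (f : N.+1.-tuple R -> \bar R) x : measurable_fun setT f ->
  measurable_fun setT (fun t : N.-tuple R => f [tuple of x :: t]).
Proof.
move=> mf.
have h1 : measurable_fun [set: N.-tuple R] (fun t : N.-tuple R => (x, t)).
  exact: measurable_fun_pair.
exact: (measurableT_comp (mcons mf) h1).
Qed.

Lemma iint_meas N d (X : measurableType d) (g : X -> N.-tuple R -> \bar R) :
  measurable_fun setT (fun z : X * N.-tuple R => g z.1 z.2) ->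
  (forall a t, 0 <= g a t) -> measurable_fun setT (fun a => iint (g a)).
Proof.
elim: N d X g => [|n IH] d X g mg g0 /=.
  have h1 : measurable_fun [set: X] (fun a : X => (a, [tuple] : 0.-tuple R)).
    exact: measurable_fun_pair.
  exact: (measurableT_comp mg h1).
pose h := fun (z : X * R) (t : n.-tuple R) => g z.1 [tuple of z.2 :: t].
have mh : measurable_fun setT (fun a => iint (h a)).
  apply: IH; last by move=> a t; exact: g0.
  have h1 : measurable_fun [set: (X * R) * n.-tuple R]
      (fun w : (X * R) * n.-tuple R => (w.1.1, [tuple of w.1.2 :: w.2])).
    apply: measurable_fun_pair => /=.
      exact: (measurableT_comp measurable_fst measurable_fst).
    apply: measurable_cons => /=.
      exact: (measurableT_comp measurable_snd measurable_fst).
    exact: measurable_snd.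
  exact: (measurableT_comp mg h1).
exact: (measurable_fun_fubini_tonelli_F (m2 := leb) _ mh (fun z => iint_ge0 (fun t => g0 _ _))).
Qed.

Lemma iint_meas1 N (f : N.+1.-tuple R -> \bar R) : measurable_fun setT f ->
  (forall x, 0 <= f x) ->
  measurable_fun setT (fun x : R => iint (fun t => f [tuple of x :: t])).
Proof.
move=> mf f0.
exact: (iint_meas (g := fun x t => f [tuple of x :: t])) (mcons mf) (fun _ _ => f0 _).
Qed.


Lemma liminfE (u : (\bar R)^nat) : limn_einf u = ereal_sup (range (einfs u)).
Proof. by rewrite limn_einf_lim; apply: cvg_lim => //; exact: cvg_einfs_sup. Qed.

Lemma le_liminf (u v : (\bar R)^nat) : (forall n, u n <= v n) ->
  limn_einf u <= limn_einf v.
Proof.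
move=> uv; rewrite !liminfE; apply: ge_ereal_sup => _ [n _ <-].
apply: le_trans (ereal_sup_ubound _); last by exists n.
apply: le_ereal_inf_tmp => _ [k /= nk <-].
apply: le_trans (uv k); apply: ereal_inf_lbound; by exists k.
Qed.

Lemma liminf_cst (c : \bar R) : limn_einf (fun _ : nat => c) = c.
Proof. by have [-> _] := cvg_limn_einf_sup (cvg_cst c). Qed.

Lemma liminf_ge0 (u : (\bar R)^nat) : (forall n, 0 <= u n) -> 0 <= limn_einf u.
Proof. by move=> u0; rewrite -(liminf_cst 0); exact: le_liminf. Qed.

Lemma liminf_le_cst (u : (\bar R)^nat) c : (forall n, u n <= c) -> limn_einf u <= c.
Proof. by move=> uc; rewrite -(liminf_cst c); exact: le_liminf. Qed.

Lemma liminf_lt (u : (\bar R)^nat) c : limn_einf u < c ->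
  forall m, exists2 n, (m <= n)%N & u n < c.
Proof.
move=> Lc m.
have : einfs u m < c.
  apply: le_lt_trans Lc; rewrite liminfE; apply: ereal_sup_ubound; by exists m.
by move=> /ereal_inf_lt [_ [n /= mn <-]] unc; exists n.
Qed.

Lemma iint_add N (f g : N.-tuple R -> \bar R) :
  (forall x, 0 <= f x) -> measurable_fun [set: N.-tuple R] f ->
  (forall x, 0 <= g x) -> measurable_fun [set: N.-tuple R] g ->
  iint (fun x => f x + g x) = iint f + iint g.
Proof.
elim: N f g => [|n IH] f g f0 mf g0 mg //=.
transitivity (\int[leb]_(x in [set: R]) (iint (fun t => f [tuple of x :: t]) +
                                         iint (fun t => g [tuple of x :: t]))).
  by apply: eq_integral => x _; apply: IH => //; exact: mcons_sec.
apply: ge0_integralD => //.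
- by move=> x _; apply: iint_ge0.
- exact: iint_meas1.
- by move=> x _; apply: iint_ge0.
- exact: iint_meas1.
Qed.

Lemma iint_fatou N (f : nat -> N.-tuple R -> \bar R) :
  (forall k, measurable_fun [set: N.-tuple R] (f k)) -> (forall k x, 0 <= f k x) ->
  iint (fun x => limn_einf (fun k => f k x)) <= limn_einf (fun k => iint (f k)).
Proof.
elim: N f => [|n IH] f mf f0 /=; first by [].
apply: le_trans (fatou leb measurableT (f := fun k x => iint (fun t => f k [tuple of x :: t])) _ _).
- apply: int_le => x.
    by apply: iint_ge0 => t; apply: liminf_ge0 => k.
  by apply: IH => k; [exact: mcons_sec|].
- by move=> k; exact: iint_meas1.
- by move=> k x _; exact: iint_ge0.
Qed.

Definition oo_on T (E : set T) (x : T) : \bar R := if x \in E then +oo else 0.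

Lemma oo_on_ge0 T (E : set T) x : 0 <= oo_on E x.
Proof. by rewrite /oo_on; case: ifP. Qed.

Lemma m_oo_on d (T : measurableType d) (E : set T) : measurable E ->
  measurable_fun [set: T] (oo_on E).
Proof.
move=> mE; apply: measurable_fun_ifT => //.
apply: (measurable_fun_bool true); rewrite setTI.
have -> : (fun x => x \in E) @^-1` [set true] = E.
  by apply/seteqP; split => x /= H; [exact: set_mem|exact: mem_set].
exact: mE.
Qed.

Lemma int01 (h : R -> \bar R) : measurable_fun [set: R] h ->
  (forall x, h x = 0 \/ h x = +oo) ->
  \int[leb]_(x in [set: R]) h x = 0 \/ \int[leb]_(x in [set: R]) h x = +oo.
Proof.
move=> mh h01.
have mS : measurable [set x | h x = +oo].
  by have := mh measurableT _ (emeasurable_set1 +oo); rewrite setTI.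
have -> : \int[leb]_(x in [set: R]) h x = \int[leb]_(x in [set x | h x = +oo]) (cst +oo x).
  rewrite [RHS]integral_mkcond; apply: eq_integral => x _; rewrite /patch.
  case: ifPn => [/set_mem -> //|/negP hS]; case: (h01 x) => // hx; exfalso; apply: hS; exact: mem_set.
rewrite integral_cst //.
have := measure_ge0 leb [set x | h x = +oo]; rewrite le_eqVlt => /orP [/eqP <-|].
  by left; rewrite mule0.
by move=> /gt0_mulye ->; right.
Qed.

Lemma iint01 N (h : N.-tuple R -> \bar R) : measurable_fun [set: N.-tuple R] h ->
  (forall x, h x = 0 \/ h x = +oo) -> iint h = 0 \/ iint h = +oo.
Proof.
elim: N h => [|n IH] h mh h01 /=; first exact: h01.
apply: int01.
  apply: iint_meas1 => // x; by case: (h01 x) => ->.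
by move=> x; apply: IH => [|t]; [exact: mcons_sec|exact: h01].
Qed.

Lemma null_of_fin N (h : N.-tuple R -> \bar R) : measurable_fun [set: N.-tuple R] h ->
  (forall x, 0 <= h x) -> iint h < +oo ->
  measurable [set x | h x = +oo] /\ iint (oo_on [set x | h x = +oo]) = 0.
Proof.
move=> mh h0 hfin.
have mS : measurable [set x | h x = +oo].
  by have := mh measurableT _ (emeasurable_set1 +oo); rewrite setTI.
split => //.
have : iint (oo_on [set x | h x = +oo]) <= iint h.
  apply: iint_le => x; first exact: oo_on_ge0.
  by rewrite /oo_on; case: ifPn => [/set_mem /= ->|_].
move=> Hle.
have h01 : forall x, oo_on [set x | h x = +oo] x = 0 \/ oo_on [set x | h x = +oo] x = +oo.
  by move=> x; rewrite /oo_on; case: ifP; [right|left].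
case: (iint01 (m_oo_on mS) h01) => // Hoo.
by have := le_lt_trans Hle hfin; rewrite Hoo ltxx.
Qed.

Lemma iint_fatou_ae N (f : nat -> N.-tuple R -> \bar R) (g : N.-tuple R -> \bar R)
  (E : set (N.-tuple R)) : measurable E -> iint (oo_on E) = 0 ->
  (forall k, measurable_fun [set: N.-tuple R] (f k)) -> (forall k x, 0 <= f k x) ->
  (forall x, 0 <= g x) -> (forall x, ~ E x -> g x <= limn_einf (fun k => f k x)) ->
  iint g <= limn_einf (fun k => iint (f k)).
Proof.
move=> mE E0 mf f0 g0 gf.
pose f' k x := f k x + oo_on E x.
have -> : (fun k => iint (f k)) = (fun k => iint (f' k)).
  apply/funext => k; rewrite /f' iint_add //; last 2 first.
  - exact: oo_on_ge0.
  - exact: m_oo_on.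
  by rewrite E0 adde0.
apply: le_trans (iint_fatou _ _); last 2 first.
- by move=> k; apply: emeasurable_funD => //; exact: m_oo_on.
- by move=> k x; apply: adde_ge0 => //; exact: oo_on_ge0.
apply: iint_le => // x; rewrite /f' /oo_on; case: ifPn => [|xE].
  move=> _.
  have -> : (fun k => f k x + +oo) = (fun _ => +oo).
    apply/funext => k; rewrite addey //.
    by rewrite gt_eqF // (lt_le_trans _ (f0 k x)) // ltNy0.
  by rewrite liminf_cst leey.
have -> : (fun k => f k x + 0) = (fun k => f k x) by apply/funext => k; rewrite adde0.
by apply: gf => Ex; move/negP: xE; apply; exact: mem_set.
Qed.


Local Close Scope ereal_scope.

Lemma powR_cvg_pos (a : R) (u : nat -> R) (p : R) : 0 < a -> u @ \oo --> a ->
  (fun k => u k `^ p) @ \oo --> a `^ p.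
Proof.
move=> a0 ua.
have -> : a `^ p = expR (p * ln a) by rewrite /powR gt_eqF.
apply: (@cvg_trans _ ((fun k => expR (p * ln (u k))) @ \oo)).
  apply: near_eq_cvg; near=> k; rewrite /powR gt_eqF //.
  near: k; exact: (cvgr_gt a ua).
have := @continuous_cvg _ _ _ _ _ (fun k => p * ln (u k)) expR (p * ln a) (@continuous_expR _ _).
apply.
apply: cvgM; first exact: cvg_cst.
exact: (cvg_comp _ _ ua (continuous_ln a0)).
Unshelve. all: end_near.
Qed.

Lemma cvg_of_powR0 (a : nat -> R) (b p : R) : 0 < p ->
  (fun k => `|a k - b| `^ p) @ \oo --> 0 -> a @ \oo --> b.
Proof.
move=> p0 /cvgrPdist_lt h; apply/cvgrPdist_lt => e e0.
have := h (e `^ p) (powR_gt0 p e0); apply: filterS => k.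
rewrite sub0r normrN ger0_norm ?powR_ge0 // => hk.
rewrite distrC ltNge; apply/negP => hle.
have := ge0_ler_powR (ltW p0) _ _ hle; rewrite !nnegrE normr_ge0 (ltW e0) => /(_ isT isT).
by rewrite leNgt hk.
Qed.

Lemma series_bdd_cvg0 (r : nat -> R) (B : R) : (forall k, 0 <= r k) ->
  (forall K, \sum_(k < K) r k <= B) -> r @ \oo --> 0.
Proof.
move=> r0 rB; apply: cvg_series_cvg_0; apply: nondecreasing_is_cvgn.
  move=> n m nm; rewrite /series /=.
  by apply: (nondecreasing_series (P := predT) (m := 0%N)) => // k _ _.
exists B => _ [n _ <-]; rewrite /series /= big_mkord; exact: rB.
Qed.

Lemma geo K : \sum_(k < K) (2^-1 : R) ^+ k.+1 = 1 - 2^-1 ^+ K.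
Proof.
elim: K => [|K IH]; first by rewrite big_ord0 expr0 subrr.
rewrite big_ord_recr /= IH exprS.
set t := (2^-1 : R) ^+ K.
have ht : 2^-1 * t + 2^-1 * t = t by rewrite -mulrDl -[2^-1]mul1r -splitr mul1r.
by rewrite -{1}ht; ring.
Qed.


Local Open Scope ereal_scope.

Lemma m_tnth_comp d (X : measurableType d) N (f : X -> N.-tuple R) (i : 'I_N) :
  measurable_fun [set: X] f -> measurable_fun [set: X] (fun a => tnth (f a) i).
Proof. by move=> mf; exact: (measurableT_comp (measurable_tnth i) mf). Qed.

Lemma edistE N (x y : N.-tuple R) :
  Defs.edist x y = Num.sqrt (\sum_(i < N) (tnth x i - tnth y i) * (tnth x i - tnth y i))%R.
Proof.
rewrite /Defs.edist /enorm /dot; congr Num.sqrt; apply: eq_bigr => i _.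
by rewrite /vsub tnth_mktuple.
Qed.

Lemma m_edist d (X : measurableType d) N (f g : X -> N.-tuple R) :
  measurable_fun [set: X] f -> measurable_fun [set: X] g ->
  measurable_fun [set: X] (fun a => Defs.edist (f a) (g a)).
Proof.
move=> mf mg.
have -> : (fun a => Defs.edist (f a) (g a)) = (fun a => Num.sqrt
    (\sum_(i < N) (tnth (f a) i - tnth (g a) i) * (tnth (f a) i - tnth (g a) i))%R).
  by apply/funext => a; rewrite edistE.
apply: (measurableT_comp (continuous_measurable_fun (@sqrt_continuous R))).
apply: measurable_sum => i.
by apply: measurable_funM; apply: measurable_funB; exact: m_tnth_comp.
Qed.

Lemma gk_ge0 N (s p : R) (v : N.-tuple R -> R) x y : 0 <= gkernel s p v x y.
Proof. by rewrite /gkernel lee_fin divr_ge0 // powR_ge0. Qed.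

Lemma m_gk N (s p : R) (v : N.-tuple R -> R) : measurable_fun [set: N.-tuple R] v ->
  measurable_fun [set: N.-tuple R * N.-tuple R] (fun z => gkernel s p v z.1 z.2).
Proof.
move=> mv; rewrite /gkernel; apply/measurable_EFinP.
have -> : (fun z : N.-tuple R * N.-tuple R =>
    `|v z.1 - v z.2| `^ p / Defs.edist z.1 z.2 `^ (N%:R + s * p))%R =
    (fun z => `|v z.1 - v z.2| `^ p * Defs.edist z.1 z.2 `^ (- (N%:R + s * p)))%R.
  by apply/funext => z; rewrite powRN.
apply: measurable_funM.
  apply: (measurableT_comp (measurable_powR p)).
  apply: (measurableT_comp (@normr_measurable _ setT)).
  apply: measurable_funB.
    exact: (measurableT_comp mv measurable_fst).
  exact: (measurableT_comp mv measurable_snd).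
apply: (measurableT_comp (measurable_powR _)).
exact: m_edist.
Qed.

Lemma m_sec d (X : measurableType d) N (h : X * N.-tuple R -> \bar R) (x : X) :
  measurable_fun setT h -> measurable_fun [set: N.-tuple R] (fun y => h (x, y)).
Proof.
move=> mh.
have h1 : measurable_fun [set: N.-tuple R] (fun y : N.-tuple R => (x, y)).
  exact: measurable_fun_pair.
exact: (measurableT_comp mh h1).
Qed.

Definition Phi N (x0 : N.-tuple R) (d s p : R) (v : N.-tuple R -> R) (x y : N.-tuple R) : \bar R :=
  if [&& (Defs.edist x0 x < d)%R, (Defs.edist x0 y < d)%R & (Defs.edist x y < d)%R]
  then gkernel s p v x y else 0.

Lemma Phi_ge0 N (x0 : N.-tuple R) d s p v x y : 0 <= Phi x0 d s p v x y.
Proof. by rewrite /Phi; case: ifP => // _; exact: gk_ge0. Qed.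

Lemma m_Phi N (x0 : N.-tuple R) d (s p : R) (v : N.-tuple R -> R) :
  measurable_fun [set: N.-tuple R] v ->
  measurable_fun [set: N.-tuple R * N.-tuple R] (fun z => Phi x0 d s p v z.1 z.2).
Proof.
move=> mv; rewrite /Phi; apply: measurable_fun_ifT; last 2 first.
- exact: m_gk.
- exact: measurable_cst.
apply: measurable_and; first apply: measurable_fun_ltr => //.
  by apply: m_edist => //; exact: measurable_cst.
apply: measurable_and; apply: measurable_fun_ltr => //.
  by apply: m_edist => //; exact: measurable_cst.
exact: m_edist.
Qed.

Lemma omd N (Om : set (N.-tuple R)) d x0 y : Om x0 -> (Defs.edist x0 y < d)%R -> Om_delta Om d y.
Proof.
move=> Ox0 h; rewrite /Om_delta; have [Oy|nOy] := pselect (Om y); [left|right] => //.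
by split => //; exists x0.
Qed.

Lemma J_ge_Phi N (Om : set (N.-tuple R)) (s p d : R) (u : N.-tuple R -> R) x0 : Om x0 ->
  iint (fun x => iint (fun y => Phi x0 d s p (zext Om u) x y)) <= J_delta Om s p d u.
Proof.
move=> Ox0; rewrite /J_delta /iint_on; apply: iint_le => x.
  by apply: iint_ge0 => y; exact: Phi_ge0.
case: (asboolP (Om_delta Om d x)) => hx.
  apply: iint_le => y; first exact: Phi_ge0.
  rewrite /Phi; case: ifP => [/and3P [h1 h2 h3]|_].
    by rewrite asboolT //; split => //; exact: omd h2.
  by case: asboolP => _ //; exact: gk_ge0.
have -> : (fun y => Phi x0 d s p (zext Om u) x y) = (fun _ => 0).
  apply/funext => y; rewrite /Phi; case: ifP => [/and3P [h1 _ _]|//].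
  by exfalso; apply: hx; exact: omd h1.
by rewrite iint0.
Qed.

Lemma J_le_Jinf N (Om : set (N.-tuple R)) (s p d : R) (u : N.-tuple R -> R) :
  J_delta Om s p d u <= J_infty Om s p u.
Proof.
rewrite /J_delta /J_infty /iint_on; apply: iint_le => x.
  case: asboolP => _ //; apply: iint_ge0 => y.
  by case: asboolP => _ //; exact: gk_ge0.
case: asboolP => _; last by apply: iint_ge0 => y; exact: gk_ge0.
apply: iint_le => y; first by case: asboolP => _ //; exact: gk_ge0.
by case: asboolP => _ //; exact: gk_ge0.
Qed.

Lemma iint_on_zext N (Om : set (N.-tuple R)) (p : R) (w u : N.-tuple R -> R) : (p != 0)%R ->
  iint_on Om (fun x => (`|w x - u x| `^ p)%:E) =
  iint (fun x => (`|zext Om w x - zext Om u x| `^ p)%:E).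
Proof.
move=> p0; rewrite /iint_on /zext; congr iint; apply/funext => x.
by case: asboolP => _ //; rewrite subrr normr0 powR0.
Qed.

End S.

Section M.
Variable R : realType.
Local Notation leb := (@lebesgue_measure R).
Local Open Scope ereal_scope.

Lemma limsup_le_cst (u : (\bar R)^nat) c : (forall n, u n <= c) -> limn_esup u <= c.
Proof.
move=> uc.
have -> : limn_esup u = - limn_einf (-%E \o u).
  by rewrite limn_einfN oppeK.
rewrite leeNl -(liminf_cst (- c)); apply: le_liminf => n /=.
by rewrite leeN2.
Qed.

Lemma J_delta_ge0 N (Om : set (N.-tuple R)) s p d u : 0 <= J_delta Om s p d u.
Proof.
apply: iint_ge0 => x; case: asboolP => _ //; apply: iint_ge0 => y.
by case: asboolP => _ //; exact: gk_ge0.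
Qed.

Lemma sum_mono (r : nat -> R) K K' : (forall k, (0 <= r k)%R) -> (K <= K')%N ->
  (\sum_(k < K) r k <= \sum_(k < K') r k)%R.
Proof.
move=> r0 KK; rewrite (big_ord_widen K' r KK).
rewrite [X in (_ <= X)%R](bigID (fun i : 'I_K' => (i < K)%N)) /=.
by rewrite lerDl; apply: sumr_ge0 => i _.
Qed.

Lemma iint_sumE N (g : nat -> N.-tuple R -> R) K :
  (forall k x, (0 <= g k x)%R) -> (forall k, measurable_fun [set: N.-tuple R] (g k)) ->
  iint (fun x => (\sum_(k < K) g k x)%:E) = \sum_(k < K) iint (fun x => (g k x)%:E).
Proof.
move=> g0 mg; elim: K => [|K IH].
  by rewrite big_ord0; under eq_fun do rewrite big_ord0; exact: iint0.
rewrite big_ord_recr /= -IH.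
under eq_fun do rewrite big_ord_recr /= EFinD.
apply: iint_add.
- by move=> x; rewrite lee_fin; apply: sumr_ge0 => i _.
- by apply/measurable_EFinP; apply: measurable_sum.
- by move=> x; rewrite lee_fin.
- by apply/measurable_EFinP.
Qed.


Lemma main_liminf N (Om : set (N.-tuple R)) (s p : R) x0 (dn : nat -> R)
    (u : N.-tuple R -> R) (un : nat -> N.-tuple R -> R) :
  (0 < p)%R -> Om x0 -> dn @ \oo --> +oo%R -> inLp Om p u ->
  (forall n, inLp Om p (un n)) -> Lp_cvg Om p un u ->
  J_infty Om s p u <= limn_einf (fun n => J_delta Om s p (dn n) (un n)).
Proof.
move=> p0 Ox0 hdn [mu _] hun hcvg.
set a := fun n => J_delta Om s p (dn n) (un n).
have a0 : forall n, 0 <= a n by move=> n; exact: J_delta_ge0.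
have Jge0 : 0 <= J_infty Om s p u.
  by apply: iint_ge0 => x; apply: iint_ge0 => y; exact: gk_ge0.
suff key : forall c : R, limn_einf a < c%:E -> J_infty Om s p u <= c%:E.
  have L0 : 0 <= limn_einf a by exact: liminf_ge0.
  case E : (limn_einf a) => [r| |]; last 2 first.
  - exact: leey.
  - by rewrite E in L0.
  apply/lee_addgt0Pr => e e0; rewrite -EFinD; apply: key.
  by rewrite E lte_fin ltrDl.
move=> c Lc.
pose e n := iint (fun x => (`|zext Om (un n) x - zext Om u x| `^ p)%:E).
have ecvg : e @ \oo --> 0%:E.
  have -> : e = (fun n => iint_on Om (fun x => (`|un n x - u x| `^ p)%:E)).
    by apply/funext => n; rewrite iint_on_zext // gt_eqF.
  exact: hcvg.
have hphi : forall k, exists n, [/\ (k <= n)%N, e n <= ((2^-1 : R) ^+ k.+1)%:E & a n < c%:E].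
  move=> k.
  have eps0 : (0 < (2^-1 : R) ^+ k.+1)%R by apply: exprn_gt0; rewrite invr_gt0.
  have [efin ecv] := (fine_cvgP e 0%R).1 ecvg.
  have hev : \forall n \near \oo, e n < ((2^-1 : R) ^+ k.+1)%:E.
    near=> n.
    have : e n \is a fin_num by near: n.
    move=> fn; rewrite -(fineK fn) lte_fin.
    by near: n; exact: (cvgr_lt _ ecv).
  have [M _ hM] := hev.
  have [n nm anc] := liminf_lt Lc (maxn k M).
  exists n; split => //.
  - exact: leq_trans (leq_maxl k M) nm.
  - apply/ltW; apply: hM => /=; exact: leq_trans (leq_maxr k M) nm.
have [phi hphik] := choice hphi.
pose v := zext Om u.
pose vk k := zext Om (un (phi k)).
pose g k x : R := (`|vk k x - v x| `^ p)%R.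
have mvk : forall k, measurable_fun [set: N.-tuple R] (vk k) by move=> k; exact: (hun (phi k)).1.
have g0 : forall k x, (0 <= g k x)%R by move=> k x; exact: powR_ge0.
have mg : forall k, measurable_fun [set: N.-tuple R] (g k).
  move=> k; apply: (measurableT_comp (measurable_powR p)).
  apply: (measurableT_comp (@normr_measurable _ setT)).
  exact: measurable_funB.
pose P K x := (\sum_(k < K) g k x)%:E.
have iP : forall K, iint (P K) <= 1%:E.
  move=> K; rewrite /P iint_sumE //.
  apply: le_trans (_ : \sum_(k < K) (((2^-1 : R) ^+ k.+1)%:E) <= _).
    apply: lee_sum => k _; by have [_ ? _] := hphik k.
  by rewrite sumEFin lee_fin geo gerBl; apply: exprn_ge0; rewrite invr_ge0.
pose S x := limn_einf (fun K => P K x).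
have P0 : forall K x, 0 <= P K x by move=> K x; rewrite lee_fin; apply: sumr_ge0 => i _.
have mP : forall K, measurable_fun [set: N.-tuple R] (P K).
  by move=> K; apply/measurable_EFinP; apply: measurable_sum.
have S0 : forall x, 0 <= S x by move=> x; apply: liminf_ge0.
have mS : measurable_fun [set: N.-tuple R] S.
  have -> : S = (fun x => - limn_esup (fun K => - P K x)).
    by apply/funext => x; rewrite (_ : (fun K => - P K x) = -%E \o (fun K => P K x)) // limn_esupN oppeK.
  apply: (measurableT_comp (@oppe_measurable _ setT)).
  apply: (measurable_fun_limn_esup (f := fun K x => - P K x)) => K.
  exact: (measurableT_comp (@oppe_measurable _ setT)).
have iS : iint S < +oo.
  apply: le_lt_trans (iint_fatou mP P0) _.
  by apply: le_lt_trans (liminf_le_cst iP) _; exact: ltry.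
have [mE E0] := null_of_fin mS S0 iS.
set E := [set x | S x = +oo] in mE E0.
have conv : forall x, ~ E x -> (fun k => vk k x) @ \oo --> v x.
  move=> x Ex.
  have Sfin : S x \is a fin_num.
    rewrite ge0_fin_numE ?S0 // lt_neqAle leey andbT; apply/eqP => Sx.
    exact: Ex.
  have Slt : S x < (fine (S x) + 1)%:E by rewrite -{1}(fineK Sfin) lte_fin ltrDl.
  have bnd : forall K, (\sum_(k < K) g k x <= fine (S x) + 1)%R.
    move=> K; have [K' KK' hK'] := liminf_lt Slt K.
    apply: le_trans (@sum_mono (fun k => g k x) K K' (fun k => g0 k x) KK') _.
    by apply/ltW; rewrite -lte_fin.
  have gto0 := series_bdd_cvg0 (fun k => g0 k x) bnd.
  exact: (cvg_of_powR0 p0 gto0).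
have dbig : forall M : R, \forall k \near \oo, (M < dn (phi k))%R.
  move=> M; have [M1 _ hM1] := (cvgryPgt dn).1 hdn M.
  exists M1 => // k /= Mk; apply: hM1 => /=.
  by have [kp _ _] := hphik k; exact: leq_trans Mk kp.
pose Ph k x y := Phi x0 (dn (phi k)) s p (vk k) x y.
have pw : forall x y, ~ E x -> ~ E y ->
    gkernel s p v x y <= limn_einf (fun k => Ph k x y).
  move=> x y Ex Ey.
  have [va0|apos] := eqVneq `|v x - v y|%R 0%R.
    rewrite /gkernel va0 powR0 ?gt_eqF // mul0r.
    by apply: liminf_ge0 => k; exact: Phi_ge0.
  have apos' : (0 < `|v x - v y|)%R by rewrite lt_def apos normr_ge0.
  suff hc : (fun k => Ph k x y) @ \oo --> gkernel s p v x y.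
    by rewrite (cvg_limn_einf_sup hc).1.
  apply: (@cvg_trans _ ((fun k => gkernel s p (vk k) x y) @ \oo)).
    have h1 := dbig (Defs.edist x0 x).
    have h2 := dbig (Defs.edist x0 y).
    have h3 := dbig (Defs.edist x y).
    apply: near_eq_cvg; near=> k.
    rewrite /Ph /Phi ifT //; apply/and3P; split.
    - by near: k.
    - by near: k.
    - by near: k.
  rewrite /gkernel; apply: cvg_EFin; first by apply: nearW => k.
  apply: cvgM; last exact: cvg_cst.
  apply: powR_cvg_pos => //.
  apply: cvg_norm; exact: (cvgB (conv x Ex) (conv y Ey)).
have mPh : forall k, measurable_fun [set: N.-tuple R * N.-tuple R] (fun z => Ph k z.1 z.2).
  by move=> k; exact: m_Phi.
have inner : forall x, ~ E x ->
    iint (fun y => gkernel s p v x y) <= limn_einf (fun k => iint (fun y => Ph k x y)).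
  move=> x Ex; apply: (iint_fatou_ae mE E0).
  - by move=> k; exact: (m_sec x (mPh k)).
  - by move=> k y; exact: Phi_ge0.
  - by move=> y; exact: gk_ge0.
  - by move=> y Ey; exact: pw.
have outer : J_infty Om s p u <=
    limn_einf (fun k => iint (fun x => iint (fun y => Ph k x y))).
  apply: (iint_fatou_ae mE E0).
  - move=> k; apply: (iint_meas (g := fun x y => Ph k x y)) => //.
    by move=> x y; exact: Phi_ge0.
  - by move=> k x; apply: iint_ge0 => y; exact: Phi_ge0.
  - by move=> x; apply: iint_ge0 => y; exact: gk_ge0.
  - exact: inner.
apply: le_trans outer _; apply: liminf_le_cst => k.
apply: le_trans (J_ge_Phi _ _ _ _ Ox0) _.
by have [_ _ /ltW] := hphik k.
Unshelve. all: end_near.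
Qed.

End M.

Unset Implicit Arguments.
Set Strict Implicit.

Theorem lemma5p1 (R : realType) (N : nat) (Om : set (N.-tuple R)) (s p : R) :
  (0 < N)%N -> domain Om -> ebounded Om -> lipschitz_boundary Om ->
  0 < s < 1 -> 1 < p ->
  Gamma_cvg_pinfty Om p (fun d u => J_delta Om s p d u) (J_infty Om s p).
Proof.
move=> _ [[x0 Ox0] _ _] _ _ _ p1.
have p0 : 0 < p := lt_trans ltr01 p1.
move=> dn hdn u hu; split.
  by move=> un hun hcvg; exact: (main_liminf s p0 Ox0 hdn hu hun hcvg).
exists (fun _ => u) => //; split.
  rewrite /Lp_cvg.
  have -> : (fun n : nat => iint_on Om (fun x => (`|u x - u x| `^ p)%:E)) = (fun _ => 0%E).
    apply/funext => n; rewrite /iint_on.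
    have -> : (fun x => if `[< Om x >] then (`|u x - u x| `^ p)%:E else 0%E) = (fun _ => 0%E).
      apply/funext => x; case: asboolP => _ //.
      by rewrite subrr normr0 powR0 // gt_eqF.
    exact: iint0.
  exact: cvg_cst.
by apply: limsup_le_cst => n; exact: J_le_Jinf.
Qed.
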